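(* Let $f\in\mathcal{K}$ have radius of convergence $R>0$, Khinchin family $(X_t)$ and fulcrum $F$. For every integer $n\ge3$, $$\limsup_{s\uparrow\ln R}\frac{|F^{(j)}(s)|}{F''(s)^{j/2}}<+\infty\quad\text{for every }3\le j\le n$$ if and only if $$\limsup_{t\uparrow R}|\mathbf{E}(\breve{X}_t^k)|<+\infty\quad\text{for every }3\le k\le n.$$
   Context: The class $\mathcal{K}$ consists of non-constant power series $f(z)=\sum_{n\ge0}a_nz^n$ with radius of convergence $R\in(0,+\infty]$, with $a_n\ge 0$ for all $n$ and $a_0>0$. For $t\in(0,R)$, $X_t$ is the random variable with $\mathbf{P}(X_t=n)=a_nt^n/f(t)$, $n\ge0$. Write $m_f(t)=\mathbf{E}(X_t)$, $\sigma_f^2(t)=\mathbf{V}(X_t)>0$ and $\breve{X}_t=(X_t-m_f(t))/\sigma_f(t)$. The fulcrum of $f$ is $F(s)=\ln f(e^s)$ for real $s<\ln R$ (with $\ln R=+\infty$ if $R=+\infty$); $F''(s)=\sigma_f^2(e^s)$. *)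

(* Defs.v *)
From Stdlib Require Import Reals.
From Coquelicot Require Import Coquelicot.
Open Scope R_scope.

Definition in_K (a : nat -> R) : Prop :=
  (forall n, 0 <= a n) /\ 0 < a 0%nat /\
  (exists n, (0 < n)%nat /\ a n <> 0) /\
  Rbar_lt (Finite 0) (CV_radius a).

Definition fK (a : nat -> R) (t : R) : R := PSeries a t.

(* Khinchin family: P(X_t = n) = a_n t^n / f(t) *)
Definition probK (a : nat -> R) (t : R) (n : nat) : R := a n * t ^ n / fK a t.

Definition meanK (a : nat -> R) (t : R) : R :=
  Series (fun n => INR n * probK a t n).

Definition varK (a : nat -> R) (t : R) : R :=
  Series (fun n => (INR n - meanK a t) ^ 2 * probK a t n).
Definition sigmaK (a : nat -> R) (t : R) : R := sqrt (varK a t).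

Definition norm_momentK (a : nat -> R) (k : nat) (t : R) : R :=
  Series (fun n => ((INR n - meanK a t) / sigmaK a t) ^ k * probK a t n).

Definition fulcrum (a : nat -> R) (s : R) : R := ln (fK a (exp s)).

Definition Rbar_ln (r : Rbar) : Rbar :=
  match r with
  | Finite x => Finite (ln x)
  | p_infty => p_infty
  | m_infty => m_infty
  end.

Definition eventually_left (r : Rbar) (P : R -> Prop) : Prop :=
  exists x0 : R, Rbar_lt (Finite x0) r /\
    forall x, x0 < x -> Rbar_lt (Finite x) r -> P x.

Definition limsup_left_finite (r : Rbar) (g : R -> R) : Prop :=
  exists M : R, eventually_left r (fun x => g x <= M).

(* Main.v *)
Require Import Defs.
From Stdlib Require Import Reals Lra Lia.
From Coquelicot Require Import Coquelicot.
Open Scope R_scope.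

Fixpoint sumr (n : nat) (f : nat -> R) : R :=
  match n with O => 0 | S m => sumr m f + f m end.

Lemma sumr_ext n f g : (forall j, (j < n)%nat -> f j = g j) -> sumr n f = sumr n g.
Proof.
  induction n; intros H; simpl; auto.
  rewrite IHn by (intros; apply H; lia). rewrite H by lia. reflexivity.
Qed.

Lemma sumr_plus n f g : sumr n (fun j => f j + g j) = sumr n f + sumr n g.
Proof. induction n; simpl; [lra|rewrite IHn; lra]. Qed.

Lemma sumr_scal n c f : sumr n (fun j => c * f j) = c * sumr n f.
Proof. induction n; simpl; [lra|rewrite IHn; lra]. Qed.

Lemma sumr_shift n f : sumr (S n) f = f O + sumr n (fun j => f (S j)).
Proof. induction n; simpl in *; [lra|]. rewrite IHn. lra. Qed.


Lemma isd_const (c x : R) : is_derive (fun _ : R => c) x 0.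
Proof. apply is_derive_Reals, derivable_pt_lim_const. Qed.
Lemma isd_plus (f g : R -> R) x df dg : is_derive f x df -> is_derive g x dg ->
  is_derive (fun y => f y + g y) x (df + dg).
Proof. intros H1 H2; apply is_derive_Reals in H1, H2; apply is_derive_Reals.
  apply (derivable_pt_lim_plus f g); auto. Qed.
Lemma isd_minus (f g : R -> R) x df dg : is_derive f x df -> is_derive g x dg ->
  is_derive (fun y => f y - g y) x (df - dg).
Proof. intros H1 H2; apply is_derive_Reals in H1, H2; apply is_derive_Reals.
  apply (derivable_pt_lim_minus f g); auto. Qed.
Lemma isd_mult (f g : R -> R) x df dg : is_derive f x df -> is_derive g x dg ->
  is_derive (fun y => f y * g y) x (df * g x + f x * dg).
Proof. intros H1 H2; apply is_derive_Reals in H1, H2; apply is_derive_Reals.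
  apply (derivable_pt_lim_mult f g); auto. Qed.
Lemma exd_of (f : R -> R) x df : is_derive f x df -> ex_derive f x.
Proof. intros H; exists df; exact H. Qed.
Lemma exd_const (c x : R) : ex_derive (fun _ : R => c) x.
Proof. exact (exd_of _ _ _ (isd_const c x)). Qed.
Lemma exd_plus (f g : R -> R) x : ex_derive f x -> ex_derive g x -> ex_derive (fun y => f y + g y) x.
Proof. intros [d1 H1] [d2 H2]; exact (exd_of _ _ _ (isd_plus f g x _ _ H1 H2)). Qed.
Lemma exd_minus (f g : R -> R) x : ex_derive f x -> ex_derive g x -> ex_derive (fun y => f y - g y) x.
Proof. intros [d1 H1] [d2 H2]; exact (exd_of _ _ _ (isd_minus f g x _ _ H1 H2)). Qed.

Lemma sumr_derive n (f f' : nat -> R -> R) s :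
  (forall j, (j < n)%nat -> is_derive (f j) s (f' j s)) ->
  is_derive (fun x => sumr n (fun j => f j x)) s (sumr n (fun j => f' j s)).
Proof.
  induction n; intros H; simpl.
  - apply isd_const.
  - apply (isd_plus (fun x => sumr n (fun j => f j x)) (f n)).
    + apply IHn; intros; apply H; lia.
    + apply H; lia.
Qed.

Lemma sumr_ex_derive n (f : nat -> R -> R) s :
  (forall j, (j < n)%nat -> ex_derive (f j) s) ->
  ex_derive (fun x => sumr n (fun j => f j x)) s.
Proof.
  induction n; intros H; simpl.
  - apply exd_const.
  - apply (exd_plus (fun x => sumr n (fun j => f j x)) (f n)).
    + apply IHn; intros; apply H; lia.
    + apply H; lia.
Qed.

Fixpoint binom (n k : nat) : R :=
  match n, k with
  | O, O => 1
  | O, S _ => 0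
  | S _, O => 1
  | S n', S k' => binom n' k' + binom n' (S k')
  end.

Lemma binom_n0 n : binom n 0 = 1.
Proof. destruct n; reflexivity. Qed.

Lemma binom_over n : forall k, (n < k)%nat -> binom n k = 0.
Proof.
  induction n; intros k Hk; destruct k; try lia; simpl; auto.
  rewrite !IHn by lia. lra.
Qed.

Lemma binom_nn n : binom n n = 1.
Proof. induction n; simpl; auto. rewrite IHn, binom_over by lia. lra. Qed.

Lemma pascal_sum p (A B : nat -> R) :
  sumr (S p) (fun j => binom p j * A (S j) * B (p - j)%nat)
  + sumr (S p) (fun j => binom p j * A j * B (S (p - j)))
  = sumr (S (S p)) (fun j => binom (S p) j * A j * B (S p - j)%nat).
Proof.
  rewrite (sumr_shift (S p) (fun j => binom (S p) j * A j * B (S p - j)%nat)).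
  rewrite (sumr_shift p (fun j => binom p j * A j * B (S (p - j)))).
  simpl (binom (S p) 0). simpl (binom (S p) (S _)).
  rewrite binom_n0. rewrite Nat.sub_0_r.
  replace (sumr (S p) (fun j => (binom p j + binom p (S j)) * A (S j) * B (S p - S j)%nat))
    with (sumr (S p) (fun j => binom p j * A (S j) * B (p - j)%nat)
          + sumr (S p) (fun j => binom p (S j) * A (S j) * B (p - j)%nat)).
  2:{ rewrite <- sumr_plus. apply sumr_ext. intros j _. simpl. ring. }
  simpl (sumr (S p) (fun j => binom p (S j) * A (S j) * B (p - j)%nat)).
  rewrite (binom_over p (S p)) by lia.
  rewrite (sumr_ext p (fun j => binom p (S j) * A (S j) * B (S (p - S j)))
                      (fun j => binom p (S j) * A (S j) * B (p - j)%nat)).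
  2:{ intros j Hj. replace (S (p - S j)) with (p - j)%nat by lia. reflexivity. }
  simpl. ring.
Qed.

Definition W (a : nat -> R) (c : R) (k n : nat) : R := (INR n - c) ^ k * a n.

Lemma rbar_le_min x y z : Rbar_le x y -> Rbar_le x z -> Rbar_le x (Rbar_min y z).
Proof. intros; apply Rbar_min_case_strong; auto. Qed.

Lemma CV_W a c k : Rbar_le (CV_radius a) (CV_radius (W a c k)).
Proof.
  induction k.
  - rewrite (CV_radius_ext (W a c 0) a). apply Rbar_le_refl.
    intros n; unfold W; simpl; ring.
  - assert (E : forall n, W a c (S k) n =
        PS_plus (PS_incr_1 (PS_derive (W a c k))) (PS_scal (-c) (W a c k)) n).
    { intros n. unfold PS_plus, PS_scal, PS_incr_1, PS_derive, plus, scal; simpl.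
      unfold mult; simpl. destruct n; unfold W; simpl; unfold zero; simpl; ring. }
    rewrite (CV_radius_ext _ _ E).
    eapply Rbar_le_trans; [|apply CV_radius_plus].
    apply rbar_le_min.
    + rewrite CV_radius_incr_1, CV_radius_derive; auto.
    + destruct (Req_dec c 0) as [->|Hc].
      * rewrite (CV_radius_ext (PS_scal (-0) (W a 0 k)) (fun _ => 0)). rewrite CV_radius_const_0.
        destruct (CV_radius a); simpl; auto.
        intros n; unfold PS_scal, scal; simpl; unfold mult; simpl; ring.
      * rewrite CV_radius_scal; auto. intros H; apply Hc; lra.
Qed.

Lemma exs_of (u : nat -> R) x : Rbar_lt (Rabs x) (CV_radius u) -> ex_series (fun n => u n * x ^ n).
Proof. intros H. apply ex_series_Rabs. apply CV_disk_inside; auto. Qed.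

Lemma PSeries_lin u v c x : Rbar_lt (Rabs x) (CV_radius u) -> Rbar_lt (Rabs x) (CV_radius v) ->
  PSeries (fun n => u n + c * v n) x = PSeries u x + c * PSeries v x.
Proof.
  intros Hu Hv. unfold PSeries.
  rewrite <- Series_scal_l. rewrite <- Series_plus.
  - apply Series_ext; intros; ring.
  - apply exs_of; auto.
  - apply (ex_series_ext (fun n => (v n * x ^ n) * c)).
    + intros n; apply Rmult_comm.
    + apply ex_series_scal_r. apply exs_of; auto.
Qed.

Definition q (a : nat -> R) c k s := PSeries (W a c k) (exp s).
Definition Uset (a : nat -> R) (s : R) := Rbar_lt (Finite s) (Rbar_ln (CV_radius a)).

Lemma U_iff a s : Rbar_lt 0 (CV_radius a) -> (Uset a s <-> Rbar_lt (exp s) (CV_radius a)).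
Proof.
  unfold Uset. destruct (CV_radius a) as [r| |]; simpl; intros H; try tauto.
  split; intros H1.
  - rewrite <- (exp_ln r) by lra. apply exp_increasing; auto.
  - rewrite <- (ln_exp s). apply ln_increasing; auto. apply exp_pos.
Qed.

Lemma U_rad a c k s : Rbar_lt 0 (CV_radius a) -> Uset a s ->
  Rbar_lt (Rabs (exp s)) (CV_radius (W a c k)).
Proof.
  intros H0 Hs. apply (U_iff a s H0) in Hs.
  rewrite Rabs_pos_eq by (left; apply exp_pos).
  eapply Rbar_lt_le_trans; [exact Hs| apply CV_W].
Qed.

Lemma U_open a s : Uset a s -> locally s (Uset a).
Proof. intros H. apply (open_Rbar_lt (Rbar_ln (CV_radius a))). exact H. Qed.

Lemma dq a c k s : Rbar_lt 0 (CV_radius a) -> Uset a s ->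
  is_derive (q a c k) s (q a c (S k) s + c * q a c k s).
Proof.
  intros H0 Hs. unfold q.
  assert (Hd := is_derive_comp (PSeries (W a c k)) exp s _ _
                  (is_derive_PSeries _ _ (U_rad a c k s H0 Hs)) (is_derive_exp s)).
  eapply is_derive_ext; [intros t; reflexivity|].
  replace (PSeries (W a c (S k)) (exp s) + c * PSeries (W a c k) (exp s))
    with (scal (exp s) (PSeries (PS_derive (W a c k)) (exp s))); [exact Hd|].
  unfold scal; simpl; unfold mult; simpl.
  rewrite <- PSeries_incr_1.
  rewrite <- PSeries_lin by (apply U_rad; auto).
  apply PSeries_ext. intros n. unfold PS_incr_1, PS_derive, W.
  destruct n; simpl; unfold zero; simpl; ring.
Qed.

Lemma q0 a c s : q a c 0 s = PSeries a (exp s).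
Proof. unfold q; apply PSeries_ext; intros n; unfold W; simpl; ring. Qed.

Lemma series_ge_term (u : nat -> R) N : ex_series u -> (forall n, 0 <= u n) -> u N <= Series u.
Proof.
  intros He Hp. rewrite (Series_incr_n u (S N)) by (auto || lia). simpl.
  assert (0 <= Series (fun k => u (S (N + k)))).
  { replace 0 with (Series (fun _ : nat => 0 * 0)).
    - apply Series_le; [intros; split; [lra| rewrite Rmult_0_l; apply Hp]|].
      apply (ex_series_incr_n u (S N)) in He. exact He.
    - rewrite Series_scal_l; ring. }
  destruct N; simpl in *; [lra|].
  assert (0 <= sum_f_R0 u N) by (apply cond_pos_sum; auto). lra.
Qed.

Lemma g_pos a s : in_K a -> Uset a s -> 0 < PSeries a (exp s).
Proof.
  intros [Hnn [Ha0 [_ H0]]] Hs.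
  unfold PSeries. eapply Rlt_le_trans; [|apply (series_ge_term _ 0)].
  - simpl; lra.
  - apply exs_of. rewrite Rabs_pos_eq by (left; apply exp_pos). apply U_iff; auto.
  - intros n; apply Rmult_le_pos; auto. apply pow_le; left; apply exp_pos.
Qed.

Definition psi a c j s := Derive_n (fulcrum a) (S j) s - match j with O => c | S _ => 0 end.
Definition Rk a p := forall c s, Uset a s ->
  q a c (S p) s = sumr (S p) (fun j => binom p j * psi a c j s * q a c (p - j) s).
Definition Sk a k := forall s, Uset a s -> ex_derive (Derive_n (fulcrum a) k) s.

Lemma K0 a : in_K a -> Rbar_lt 0 (CV_radius a).
Proof. intros [_ [_ [_ H]]]; exact H. Qed.

Lemma gq_pos a c s : in_K a -> Uset a s -> 0 < q a c 0 s.
Proof. intros. rewrite q0. apply g_pos; auto. Qed.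

Lemma dF a s : in_K a -> Uset a s ->
  Derive (fulcrum a) s = (q a 0 1 s + 0 * q a 0 0 s) * / PSeries a (exp s).
Proof.
  intros HK Hs. apply is_derive_unique.
  unfold fulcrum, fK.
  assert (Hin : is_derive (fun x => PSeries a (exp x)) s (q a 0 1 s + 0 * q a 0 0 s)).
  { apply (is_derive_ext (q a 0 0)); [intros t; apply q0|]. apply dq; auto. apply K0; auto. }
  assert (Hl := is_derive_ln _ (g_pos a s HK Hs)).
  exact (is_derive_comp ln (fun x => PSeries a (exp x)) s _ _ Hl Hin).
Qed.

Lemma Rk0 a : in_K a -> Rk a 0.
Proof.
  intros HK c s Hs. simpl. unfold psi. simpl. rewrite dF by auto.
  assert (Hg := g_pos a s HK Hs).
  assert (E : q a c 1 s = q a 0 1 s + (-c) * PSeries a (exp s)).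
  { unfold q. rewrite <- PSeries_lin.
    - apply PSeries_ext; intros n; unfold W; simpl; ring.
    - apply U_rad; auto; apply K0; auto.
    - rewrite Rabs_pos_eq by (left; apply exp_pos). apply U_iff; auto; apply K0; auto. }
  rewrite E, !q0. field. lra.
Qed.

Lemma psi_deriv a c j s : Sk a (S j) -> Uset a s -> is_derive (psi a c j) s (psi a c (S j) s).
Proof.
  intros HS Hs. unfold psi.
  replace (Derive_n (fulcrum a) (S (S j)) s - 0)
    with (Derive (Derive_n (fulcrum a) (S j)) s - 0) by reflexivity.
  apply isd_minus; [|apply isd_const].
  apply Derive_correct. apply HS; auto.
Qed.

Lemma Rstep a p : in_K a -> (forall i, (1 <= i <= S p)%nat -> Sk a i) -> Rk a p -> Rk a (S p).
Proof.
  intros HK HS HR c s Hs.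
  assert (H0 := K0 a HK).
  set (f := fun j x => binom p j * (psi a c j x * q a c (p - j) x)).
  set (f' := fun j (x : R) => binom p j * (psi a c (S j) x * q a c (p - j) x
              + psi a c j x * (q a c (S (p - j)) x + c * q a c (p - j) x))).
  assert (Hd1 : is_derive (fun x => sumr (S p) (fun j => f j x)) s (sumr (S p) (fun j => f' j s))).
  { apply sumr_derive. intros j Hj. unfold f, f'.
    apply is_derive_scal. apply isd_mult.
    - apply psi_deriv; auto. apply HS; lia.
    - apply dq; auto. }
  assert (Hloc : locally s (fun x => sumr (S p) (fun j => f j x) = q a c (S p) x)).
  { generalize (U_open a s Hs). apply filter_imp. intros x Hx.
    rewrite HR by auto. apply sumr_ext; intros j _; unfold f; ring. }
  assert (Hd1' := is_derive_ext_loc _ _ _ _ Hloc Hd1).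
  assert (Hd2 := dq a c (S p) s H0 Hs).
  apply is_derive_unique in Hd1'. apply is_derive_unique in Hd2.
  rewrite Hd1' in Hd2. clear Hd1' Hd1 Hloc.
  assert (E : q a c (S (S p)) s = sumr (S p) (fun j => f' j s) - c * q a c (S p) s) by lra.
  rewrite E. clear E Hd2.
  rewrite <- (pascal_sum p (fun j => psi a c j s) (fun i => q a c i s)).
  rewrite (HR c s Hs).
  unfold f'.
  rewrite (sumr_ext (S p) _ (fun j => (binom p j * psi a c (S j) s * q a c (p - j) s
     + binom p j * psi a c j s * q a c (S (p - j)) s) + c * (binom p j * psi a c j s * q a c (p - j) s)))
    by (intros; ring).
  rewrite sumr_plus, sumr_plus, sumr_scal. ring.
Qed.

Lemma psi0 a j x : psi a 0 j x = Derive_n (fulcrum a) (S j) x.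
Proof. unfold psi; destruct j; ring. Qed.

Lemma helper_div (A B g : R) : g <> 0 -> (A + 1 * B * g - A) / g = B.
Proof. intros; field; auto. Qed.

Lemma Sstep a p : in_K a -> (forall i, (1 <= i <= p)%nat -> Sk a i) -> Rk a p -> Sk a (S p).
Proof.
  intros HK HS HR s Hs.
  assert (H0 := K0 a HK).
  set (ex := fun x => (q a 0 (S p) x - sumr p (fun j => binom p j * psi a 0 j x * q a 0 (p - j) x))
                      / q a 0 0 x).
  apply (ex_derive_ext_loc ex).
  - generalize (U_open a s Hs). apply filter_imp. intros x Hx.
    unfold ex. rewrite (HR 0 x Hx). simpl sumr. rewrite binom_nn, psi0.
    assert (Hg := gq_pos a 0 x HK Hx). rewrite Nat.sub_diag.
    apply helper_div. lra.
  - unfold ex. apply ex_derive_div.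
    + apply exd_minus.
      * apply (exd_of _ _ _ (dq a 0 (S p) s H0 Hs)).
      * apply sumr_ex_derive. intros j Hj.
        apply ex_derive_mult.
        -- apply ex_derive_scal. apply (exd_of _ _ _ (psi_deriv a 0 j s (HS (S j) ltac:(lia)) Hs)).
        -- apply (exd_of _ _ _ (dq a 0 (p - j) s H0 Hs)).
    + apply (exd_of _ _ _ (dq a 0 0 s H0 Hs)).
    + assert (Hg := gq_pos a 0 s HK Hs). lra.
Qed.

Lemma all_R a : in_K a -> forall p, Rk a p /\ (forall i, (1 <= i <= S p)%nat -> Sk a i).
Proof.
  intros HK p. induction p.
  - assert (R0 := Rk0 a HK). split; auto.
    intros i Hi. replace i with 1%nat by lia. apply Sstep; auto. intros; lia.
  - destruct IHp as [HR HS].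
    assert (HR' := Rstep a p HK HS HR). split; auto.
    intros i Hi. destruct (Nat.eq_dec i (S (S p))) as [->|Hne].
    + apply Sstep; auto.
    + apply HS; lia.
Qed.

Lemma ex_u a c k s : in_K a -> Uset a s ->
  ex_series (fun n => W a c k n * exp s ^ n).
Proof. intros HK Hs. apply exs_of. apply U_rad; auto. apply K0; auto. Qed.

Lemma mean_eq a s : in_K a -> Uset a s -> meanK a (exp s) = Derive_n (fulcrum a) 1 s.
Proof.
  intros HK Hs. simpl. rewrite dF by auto.
  unfold meanK, probK, fK.
  rewrite (Series_ext _ (fun n => (W a 0 1 n * exp s ^ n) * / PSeries a (exp s))).
  - rewrite Series_scal_r. fold (PSeries (W a 0 1) (exp s)). fold (q a 0 1 s). ring.
  - intros n; unfold W; simpl; unfold Rdiv; ring.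
Qed.

Lemma var_eq a s : in_K a -> Uset a s -> varK a (exp s) = Derive_n (fulcrum a) 2 s.
Proof.
  intros HK Hs. set (m := meanK a (exp s)).
  assert (Hg := g_pos a s HK Hs).
  assert (E : varK a (exp s) = q a m 2 s / PSeries a (exp s)).
  { unfold varK, probK, fK. fold m.
    rewrite (Series_ext _ (fun n => (W a m 2 n * exp s ^ n) * / PSeries a (exp s))).
    - rewrite Series_scal_r. reflexivity.
    - intros n; unfold W; simpl; unfold Rdiv; ring. }
  rewrite E. destruct (all_R a HK 1) as [HR _].
  rewrite (HR m s Hs). simpl sumr. unfold psi.
  assert (Hm : Derive_n (fulcrum a) 1 s = m) by (unfold m; rewrite mean_eq; auto).
  rewrite Hm. simpl binom. simpl Nat.sub. rewrite q0. field. lra.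
Qed.

Lemma var_pos a s : in_K a -> Uset a s -> 0 < varK a (exp s).
Proof.
  intros HK Hs. assert (Hg := g_pos a s HK Hs).
  destruct HK as [Hnn [Ha0 [[N [HN HaN]] Hr]]].
  set (m := meanK a (exp s)).
  assert (Hex : ex_series (fun n => (INR n - m) ^ 2 * probK a (exp s) n)).
  { apply (ex_series_ext (fun n => (W a m 2 n * exp s ^ n) * / PSeries a (exp s))).
    - intros n; unfold W, probK, fK; simpl; unfold Rdiv; ring.
    - apply ex_series_scal_r. apply ex_u; auto. repeat split; auto. exists N; auto. }
  assert (Hp : forall n, 0 <= (INR n - m) ^ 2 * probK a (exp s) n).
  { intros n. apply Rmult_le_pos; [apply pow2_ge_0|]. unfold probK, fK, Rdiv.
    apply Rmult_le_pos; [apply Rmult_le_pos; auto; apply pow_le; left; apply exp_pos|].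
    left; apply Rinv_0_lt_compat; auto. }
  assert (HaNp : 0 < a N) by (destruct (Hnn N); auto; congruence).
  unfold varK. fold m.
  destruct (Req_dec m 0) as [Hm|Hm].
  - eapply Rlt_le_trans; [|apply (series_ge_term _ N Hex Hp)].
    rewrite Hm. unfold probK, fK, Rdiv. apply Rmult_lt_0_compat.
    + apply pow_lt. rewrite Rminus_0_r. apply lt_0_INR; lia.
    + apply Rmult_lt_0_compat; [apply Rmult_lt_0_compat; auto; apply pow_lt, exp_pos|].
      apply Rinv_0_lt_compat; auto.
  - eapply Rlt_le_trans; [|apply (series_ge_term _ 0 Hex Hp)].
    unfold probK, fK, Rdiv. apply Rmult_lt_0_compat.
    + simpl. replace ((0 - m) * ((0 - m) * 1)) with (m * m) by ring.
      assert (0 < m * m) by (destruct (Rlt_or_le 0 m); [nra|assert (m < 0) by lra; nra]). lra.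
    + simpl. apply Rmult_lt_0_compat; [lra|]. apply Rinv_0_lt_compat; auto.
Qed.

Definition Mf a k s := norm_momentK a k (exp s).
Definition Kf a j s := psi a (meanK a (exp s)) j s / (sigmaK a (exp s)) ^ (S j).

Lemma sig_pos a s : in_K a -> Uset a s -> 0 < sigmaK a (exp s).
Proof. intros. unfold sigmaK. apply sqrt_lt_R0. apply var_pos; auto. Qed.

Lemma mom_eq a k s : in_K a -> Uset a s ->
  Mf a k s = q a (meanK a (exp s)) k s / (PSeries a (exp s) * sigmaK a (exp s) ^ k).
Proof.
  intros HK Hs. assert (Hg := g_pos a s HK Hs). assert (Hsg := sig_pos a s HK Hs).
  unfold Mf, norm_momentK, probK, fK.
  set (m := meanK a (exp s)). set (sg := sigmaK a (exp s)) in *.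
  rewrite (Series_ext _ (fun n => (W a m k n * exp s ^ n) * / (PSeries a (exp s) * sg ^ k))).
  - rewrite Series_scal_r. reflexivity.
  - intros n; unfold W, Rdiv. rewrite Rpow_mult_distr, pow_inv.
    field. repeat split; try lra; try (apply pow_nonzero; lra).
Qed.

Lemma rec_M a p s : in_K a -> Uset a s ->
  Mf a (S p) s = sumr (S p) (fun j => binom p j * Kf a j s * Mf a (p - j) s).
Proof.
  intros HK Hs. assert (Hg := g_pos a s HK Hs). assert (Hsg := sig_pos a s HK Hs).
  rewrite mom_eq by auto.
  destruct (all_R a HK p) as [HR _]. rewrite (HR _ s Hs).
  unfold Rdiv. rewrite Rmult_comm, <- sumr_scal. apply sumr_ext. intros j Hj.
  rewrite mom_eq by auto. unfold Kf.
  set (sg := sigmaK a (exp s)) in *.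
  replace (sg ^ S p) with (sg ^ S j * sg ^ (p - j)).
  2:{ rewrite <- pow_add. f_equal. lia. }
  field. repeat split; try lra; apply pow_nonzero; lra.
Qed.

Lemma K0v a s : in_K a -> Uset a s -> Kf a 0 s = 0.
Proof.
  intros HK Hs. unfold Kf, psi. rewrite mean_eq by auto. unfold Rdiv. ring.
Qed.

Lemma sig2 a s : in_K a -> Uset a s -> sigmaK a (exp s) ^ 2 = Derive_n (fulcrum a) 2 s.
Proof.
  intros HK Hs. unfold sigmaK. rewrite <- var_eq by auto. simpl. rewrite Rmult_1_r.
  apply sqrt_sqrt. left; apply var_pos; auto.
Qed.

Lemma K1v a s : in_K a -> Uset a s -> Kf a 1 s = 1.
Proof.
  intros HK Hs. unfold Kf, psi. rewrite sig2 by auto.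
  assert (0 < Derive_n (fulcrum a) 2 s) by (rewrite <- var_eq by auto; apply var_pos; auto).
  field. lra.
Qed.

Lemma M0v a s : in_K a -> Uset a s -> Mf a 0 s = 1.
Proof.
  intros HK Hs. rewrite mom_eq by auto. rewrite q0. assert (Hg := g_pos a s HK Hs).
  simpl. field. lra.
Qed.

Lemma stat_eq a i s : in_K a -> Uset a s ->
  Rabs (Derive_n (fulcrum a) (S (S i)) s) / Rpower (Derive_n (fulcrum a) 2 s) (INR (S (S i)) / 2)
  = Rabs (Kf a (S i) s).
Proof.
  intros HK Hs. assert (Hsg := sig_pos a s HK Hs).
  assert (Hv : 0 < Derive_n (fulcrum a) 2 s) by (rewrite <- var_eq by auto; apply var_pos; auto).
  replace (INR (S (S i)) / 2) with (/ 2 * INR (S (S i))) by (unfold Rdiv; ring).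
  rewrite <- Rpower_mult, Rpower_sqrt by auto. rewrite Rpower_pow by (apply sqrt_lt_R0; auto).
  rewrite <- var_eq by auto. fold (sigmaK a (exp s)).
  unfold Kf, psi. rewrite Rminus_0_r. unfold Rdiv. rewrite Rabs_mult, Rabs_inv.
  rewrite (Rabs_pos_eq (_ ^ _)) by (apply pow_le; lra). reflexivity.
Qed.

Lemma ev_and r (P Q : R -> Prop) : eventually_left r P -> eventually_left r Q ->
  eventually_left r (fun x => P x /\ Q x).
Proof.
  intros [x0 [H0 HP]] [x1 [H1 HQ]]. exists (Rmax x0 x1). split.
  - apply Rmax_case; auto.
  - intros x Hx Hr. split; [apply HP|apply HQ]; auto.
    + eapply Rle_lt_trans; [apply Rmax_l|exact Hx].
    + eapply Rle_lt_trans; [apply Rmax_r|exact Hx].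
Qed.

Lemma ev_imp r (P Q : R -> Prop) : (forall x : R, Rbar_lt (Finite x) r -> P x -> Q x) ->
  eventually_left r P -> eventually_left r Q.
Proof. intros H [x0 [H0 HP]]. exists x0; split; auto. Qed.

Definition EB a (f : R -> R) := limsup_left_finite (Rbar_ln (CV_radius a)) (fun x => Rabs (f x)).

Lemma EB_ext a f g : (forall s, Uset a s -> f s = g s) -> EB a f -> EB a g.
Proof.
  intros H [M HM]. exists M. revert HM. apply ev_imp. intros x Hx Hf.
  rewrite <- H; auto.
Qed.

Lemma pos_pt a : in_K a -> exists t1, 0 < t1 /\ Rbar_lt t1 (CV_radius a).
Proof.
  intros HK. assert (H := K0 a HK). destruct (CV_radius a) as [r| |]; simpl in *.
  - exists (r / 2). split; lra.
  - exists 1. split; [lra|exact I].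
  - contradiction.
Qed.

Lemma EB_const a c : in_K a -> EB a (fun _ => c).
Proof.
  intros HK. destruct (pos_pt a HK) as [t1 [Ht1 Hr]].
  exists (Rabs c). exists (ln t1). split.
  - apply (U_iff a (ln t1) (K0 a HK)). rewrite exp_ln; auto.
  - intros; lra.
Qed.

Lemma EB_plus a f g : EB a f -> EB a g -> EB a (fun x => f x + g x).
Proof.
  intros [M1 H1] [M2 H2]. exists (M1 + M2).
  generalize (ev_and _ _ _ H1 H2). apply ev_imp. intros x _ [A B].
  eapply Rle_trans; [apply Rabs_triang|lra].
Qed.

Lemma EB_opp a f : EB a f -> EB a (fun x => - f x).
Proof.
  intros [M1 H1]. exists M1. revert H1. apply ev_imp. intros x _ A. rewrite Rabs_Ropp; auto.
Qed.

Lemma EB_mult a f g : EB a f -> EB a g -> EB a (fun x => f x * g x).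
Proof.
  intros [M1 H1] [M2 H2]. exists (M1 * M2).
  generalize (ev_and _ _ _ H1 H2). apply ev_imp. intros x _ [A B].
  rewrite Rabs_mult. apply Rmult_le_compat; auto; apply Rabs_pos.
Qed.

Lemma EB_sumr a n (f : nat -> R -> R) : in_K a -> (forall j, (j < n)%nat -> EB a (f j)) ->
  EB a (fun x => sumr n (fun j => f j x)).
Proof.
  intros HK. induction n; intros H; simpl.
  - apply EB_const; auto.
  - apply (EB_plus a (fun x => sumr n (fun j => f j x)) (f n)).
    + apply IHn; intros; apply H; lia.
    + apply H; lia.
Qed.

Lemma strong (P : nat -> Prop) n : (forall k, (forall i, (i < k)%nat -> P i) -> (k <= n)%nat -> P k) ->
  forall k, (k <= n)%nat -> P k.
Proof.
  intros H. induction n.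
  - intros k Hk. apply H; [intros; lia|lia].
  - intros k Hk. destruct (Nat.eq_dec k (S n)) as [->|Hne].
    + apply H; auto. intros i Hi. apply IHn; [|lia].
      intros k' Hk' Hk''. apply H; auto.
    + apply IHn; [|lia]. intros k' Hk' Hk''. apply H; auto.
Qed.

Lemma dirMK a n : in_K a -> (forall i, (i < n)%nat -> EB a (Kf a i)) ->
  forall k, (k <= n)%nat -> EB a (Mf a k).
Proof.
  intros HK HKf. apply strong. intros k IH Hk. destruct k as [|p].
  - apply (EB_ext a (fun _ => 1)); [intros; symmetry; apply M0v; auto|apply EB_const; auto].
  - apply (EB_ext a (fun s => sumr (S p) (fun j => binom p j * Kf a j s * Mf a (p - j) s))).
    + intros s Hs. symmetry. apply rec_M; auto.
    + apply EB_sumr; auto. intros j Hj.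
      apply (EB_mult a (fun s => binom p j * Kf a j s)).
      * apply (EB_mult a (fun _ => binom p j)); [apply EB_const; auto|]. apply HKf; lia.
      * apply IH; lia.
Qed.

Lemma dirKM a n : in_K a -> (forall k, (k <= n)%nat -> EB a (Mf a k)) ->
  forall i, (i < n)%nat -> EB a (Kf a i).
Proof.
  intros HK HM.
  assert (H : forall i, (i <= n - 1)%nat -> (i < n)%nat -> EB a (Kf a i)).
  2:{ intros i Hi. apply H; lia. }
  apply (strong (fun i => (i < n)%nat -> EB a (Kf a i))). intros p IH Hp Hpn.
  apply (EB_ext a (fun s => Mf a (S p) s + - sumr p (fun j => binom p j * Kf a j s * Mf a (p - j) s))).
  - intros s Hs. rewrite rec_M by auto. simpl sumr. rewrite binom_nn, Nat.sub_diag, M0v by auto. ring.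
  - apply EB_plus; [apply HM; lia|]. apply EB_opp. apply EB_sumr; auto. intros j Hj.
    apply (EB_mult a (fun s => binom p j * Kf a j s)).
    + apply (EB_mult a (fun _ => binom p j)); [apply EB_const; auto|]. apply IH; lia.
    + apply HM; lia.
Qed.

Lemma t_to_s a k : in_K a ->
  limsup_left_finite (CV_radius a) (fun t => Rabs (norm_momentK a k t)) -> EB a (Mf a k).
Proof.
  intros HK [M [x0 [Hx0 H]]]. destruct (pos_pt a HK) as [t1 [Ht1 Hr]].
  exists M. exists (ln (Rmax x0 t1)).
  assert (Hpos : 0 < Rmax x0 t1) by (eapply Rlt_le_trans; [exact Ht1|apply Rmax_r]).
  split.
  - apply (U_iff a _ (K0 a HK)). rewrite exp_ln by auto. apply Rmax_case; auto.
  - intros s Hs HU. unfold Mf. apply H.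
    + eapply Rle_lt_trans; [apply Rmax_l|]. rewrite <- (exp_ln (Rmax x0 t1)) by auto.
      apply exp_increasing; auto.
    + apply (U_iff a s (K0 a HK)); auto.
Qed.

Lemma s_to_t a k : in_K a -> EB a (Mf a k) ->
  limsup_left_finite (CV_radius a) (fun t => Rabs (norm_momentK a k t)).
Proof.
  intros HK [M [y0 [Hy0 H]]]. exists M. exists (exp y0). split.
  - apply (U_iff a y0 (K0 a HK)); auto.
  - intros t Ht Hr. assert (Htp : 0 < t) by (eapply Rlt_trans; [apply exp_pos|exact Ht]).
    rewrite <- (exp_ln t) by auto. apply H.
    + rewrite <- (ln_exp y0). apply ln_increasing; auto. apply exp_pos.
    + apply (U_iff a _ (K0 a HK)). rewrite exp_ln; auto.
Qed.

Theorem lemma3p2 (a : nat -> R) (Ha : in_K a) (n : nat) (Hn : (3 <= n)%nat) :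
  (forall j : nat, (3 <= j <= n)%nat ->
     limsup_left_finite (Rbar_ln (CV_radius a))
       (fun s => Rabs (Derive_n (fulcrum a) j s)
                 / Rpower (Derive_n (fulcrum a) 2 s) (INR j / 2)))
  <->
  (forall k : nat, (3 <= k <= n)%nat ->
     limsup_left_finite (CV_radius a)
       (fun t => Rabs (norm_momentK a k t))).
Proof.
  assert (HKall : (forall i, (i < n)%nat -> EB a (Kf a i)) <->
     (forall j : nat, (3 <= j <= n)%nat ->
     limsup_left_finite (Rbar_ln (CV_radius a))
       (fun s => Rabs (Derive_n (fulcrum a) j s)
                 / Rpower (Derive_n (fulcrum a) 2 s) (INR j / 2)))).
  { split.
    - intros H j Hj. destruct j as [|[|[|i]]]; try lia.
      assert (E := H (S (S i)) ltac:(lia)). destruct E as [M HM]. exists M.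
      revert HM. apply ev_imp. intros x Hx Hle. change (Uset a x) in Hx.
      rewrite stat_eq by auto. exact Hle.
    - intros H i Hi. destruct i as [|[|i]].
      + apply (EB_ext a (fun _ => 0)); [intros; symmetry; apply K0v; auto|apply EB_const; auto].
      + apply (EB_ext a (fun _ => 1)); [intros; symmetry; apply K1v; auto|apply EB_const; auto].
      + destruct (H (S (S (S i))) ltac:(lia)) as [M HM]. exists M.
        revert HM. apply ev_imp. intros x Hx Hle. change (Uset a x) in Hx.
        rewrite stat_eq in Hle by auto. exact Hle. }
  assert (HMall : (forall k, (k <= n)%nat -> EB a (Mf a k)) <->
     (forall k : nat, (3 <= k <= n)%nat ->
     limsup_left_finite (CV_radius a)
       (fun t => Rabs (norm_momentK a k t)))).
  { split.
    - intros H k Hk. apply s_to_t; auto. apply H; lia.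
    - intros H.
      assert (Hk01 : forall i, (i < 2)%nat -> EB a (Kf a i)).
      { intros i Hi. destruct i as [|[|i]]; try lia.
        + apply (EB_ext a (fun _ => 0)); [intros; symmetry; apply K0v; auto|apply EB_const; auto].
        + apply (EB_ext a (fun _ => 1)); [intros; symmetry; apply K1v; auto|apply EB_const; auto]. }
      intros k Hk. destruct (Nat.le_gt_cases k 2).
      + apply (dirMK a 2 Ha Hk01); auto.
      + apply t_to_s; [exact Ha|]. apply H; lia. }
  rewrite <- HKall, <- HMall. split.
  - intros H. apply dirMK; auto.
  - intros H. apply dirKM; auto.
Qed.
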